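(* Let $z_1,z_2,z_3,z_4\in\mathbb{C}$ be the vertices of a convex quadrilateral, labelled in cyclic order around its boundary. For $j\neq k$ put $z_{jk}=z_k-z_j$, $r_{jk}=|z_{jk}|$, and let $At=At(z_1,z_2,z_3,z_4)$ be the (planar) Atiyah determinant of these points. Let the angles $\alpha_j,\beta_j,\gamma_j$ ($j=1,\dots,4$, indices mod $4$) be $$\alpha_j=\angle z_{j+1}z_jz_{j+2},\qquad \beta_j=\angle z_{j+2}z_jz_{j-1},\qquad \gamma_j=\angle z_{j-1}z_jz_{j+1}.$$ Define $$S_1=\sum_{j=1}^4(\cos\alpha_j+\cos\beta_j+\cos\gamma_j),\qquad S_2=\sum_{j=1}^4(\cos\alpha_j+\cos\beta_j+\cos\gamma_j)(\cos\alpha_{j+1}+\cos\gamma_{j+2}+\cos\beta_{j+3}),$$ and $$E=2\sum_{j=1}^4\Big(\sin\alpha_j\sin\alpha_{j+1}+\sin\beta_j\sin\beta_{j+1}-\sin\gamma_j\sin\alpha_{j+1}-\sin\gamma_{j+1}\sin\beta_j+\sin\gamma_j\sin\alpha_{j+2}+\sin\gamma_j\sin\beta_{j+2}\Big)$$ $$\qquad-4\sum_{j=1}^4\sin\alpha_{j+1}\sin\beta_j+4\sin\gamma_1\sin\gamma_3+4\sin\gamma_2\sin\gamma_4 .$$ Then $$At=r_{12}r_{13}r_{14}r_{23}r_{24}r_{34}\,\big(24+8S_1+2S_2+E\big).$$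
   Context: Planar Atiyah determinant: identify the plane containing the points with $\{0\}\times\mathbb{C}\subset\mathbb{R}\times\mathbb{C}=\mathbb{R}^3$. For distinct $z_1,\dots,z_4\in\mathbb{C}$ and $j\ne k$ let $z_{jk}=z_k-z_j$, $r_{jk}=|z_{jk}|$, $u_{jk}=z_{jk}/r_{jk}$. For an ''observer'' $k$ and another point $j\neq k$ define the vector $w_{kj}=(x_{kj},y_{kj})\in\mathbb{C}^2$ (a Hopf lift of $z_{kj}$) by $w_{kj}=\sqrt{r_{kj}}\,(1,\overline{u}_{kj})$ if $k<j$ and $w_{kj}=\sqrt{r_{kj}}\,(u_{kj},1)$ if $k>j$. Let $C_k\in\mathbb{C}^4$ be the vector of coefficients of $1,t,t^2,t^3$ in the polynomial $\prod_{j\neq k}(x_{kj}+y_{kj}t)$ (the symmetric tensor product of the three vectors $w_{kj}$). The Atiyah determinant $At(z_1,\dots,z_4)$ is the determinant of the $4\times4$ matrix whose $k$-th column is $C_k$; it is a real number for planar points. Angles $\angle XYZ\in[0,\pi]$ denote the usual unsigned angle at $Y$. *)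

(* Defs.v *)
From HB Require Import structures.
From mathcomp Require Import all_boot all_order all_algebra.
From mathcomp Require Import complex.
From mathcomp Require Import reals trigo.
Set Implicit Arguments. Unset Strict Implicit. Unset Printing Implicit Defensive.
Import Order.TTheory GRing.Theory Num.Theory.
Local Open Scope ring_scope.
Local Open Scope complex_scope.

Section Atiyah.
Variable R : realType.

(* the four points, cyclically indexed: index 0,1,2,3 = z_1,z_2,z_3,z_4 *)
Definition cyc (z1 z2 z3 z4 : R[i]) (j : nat) : R[i] :=
  nth 0 [:: z1; z2; z3; z4] (j %% 4).

Definition cabs (z : R[i]) : R := Num.sqrt (complex.Re z ^+ 2 + complex.Im z ^+ 2).

Definition hopf_lift (k j : nat) (zk zj : R[i]) : R[i] * R[i] :=
  let d := zj - zk in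
  let r := cabs d in
  let u := d / r%:C in
  let s := (Num.sqrt r)%:C in
  if (k < j)%N then (s, s * u^*) else (s * u, s).

Definition atiyah_poly (z : nat -> R[i]) (k : 'I_4) : {poly R[i]} :=
  \prod_(j < 4 | j != k)
     ((hopf_lift k j (z k) (z j)).1%:P + (hopf_lift k j (z k) (z j)).2%:P * 'X).

Definition atiyah_det (z : nat -> R[i]) : R[i] :=
  \det (\matrix_(i < 4, k < 4) (atiyah_poly z k)`_i).

Definition cross (a b : R[i]) : R := complex.Re a * complex.Im b - complex.Im a * complex.Re b.

(* z(0..3) are the vertices of a (non-degenerate) convex quadrilateral
   listed in cyclic order: for each edge z_j z_{j+1}, the two remaining
   vertices lie strictly on the same side (the same side for all edges,
   i.e. a consistent orientation s = +1 or -1). *)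
Definition convex_quad (z : nat -> R[i]) : Prop :=
  exists s : R, (s = 1 \/ s = -1) /\
    forall j m : nat, (m = 2 \/ m = 3)%N ->
      0 < s * cross (z (j + 1)%N - z j) (z (j + m)%N - z j).

Definition angle (X Y Z : R[i]) : R :=
  acos ((complex.Re (X - Y) * complex.Re (Z - Y) + complex.Im (X - Y) * complex.Im (Z - Y))
          / (cabs (X - Y) * cabs (Z - Y))).

(* 0-based versions of alpha_j, beta_j, gamma_j (j-1 = j+3 mod 4) *)
Definition alpha (z : nat -> R[i]) (j : nat) : R :=
  angle (z (j + 1)%N) (z j) (z (j + 2)%N).
Definition beta (z : nat -> R[i]) (j : nat) : R :=
  angle (z (j + 2)%N) (z j) (z (j + 3)%N).
Definition gamma (z : nat -> R[i]) (j : nat) : R :=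
  angle (z (j + 3)%N) (z j) (z (j + 1)%N).

Definition S1 (z : nat -> R[i]) : R :=
  \sum_(j < 4) (cos (alpha z j) + cos (beta z j) + cos (gamma z j)).

Definition S2 (z : nat -> R[i]) : R :=
  \sum_(j < 4) ((cos (alpha z j) + cos (beta z j) + cos (gamma z j))
     * (cos (alpha z (j + 1)%N) + cos (gamma z (j + 2)%N)
        + cos (beta z (j + 3)%N))).

Definition Eterm (z : nat -> R[i]) : R :=
  2 * (\sum_(j < 4)
        (sin (alpha z j) * sin (alpha z (j + 1)%N)
         + sin (beta z j) * sin (beta z (j + 1)%N)
         - sin (gamma z j) * sin (alpha z (j + 1)%N)
         - sin (gamma z (j + 1)%N) * sin (beta z j)
         + sin (gamma z j) * sin (alpha z (j + 2)%N)
         + sin (gamma z j) * sin (beta z (j + 2)%N)))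
  - 4 * (\sum_(j < 4) sin (alpha z (j + 1)%N) * sin (beta z j))
  + 4 * sin (gamma z 0) * sin (gamma z 2)
  + 4 * sin (gamma z 1) * sin (gamma z 3).

End Atiyah.

(* Main.v *)
Require Import Defs.
From HB Require Import structures.
From mathcomp Require Import all_boot all_order all_algebra.
From mathcomp Require Import complex.
From mathcomp Require Import reals trigo.
From mathcomp Require Import ring lra.
Import Order.TTheory GRing.Theory Num.Theory.
Local Open Scope ring_scope.
Local Open Scope complex_scope.
Set Implicit Arguments. Unset Strict Implicit.
Local Notation Re := complex.Re.
Local Notation Im := complex.Im.


Definition minf (F : Type) (f : nat -> nat -> F) (i0 j0 a b : nat) := f (bump i0 a) (bump j0 b).
Lemma minor_mx (F : comPzRingType) n (f : nat -> nat -> F) (i0 j0 : 'I_n.+1) :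
  row' i0 (col' j0 (\matrix_(i < n.+1, j < n.+1) f i j)) =
  \matrix_(i < n, j < n) (@minf F f i0 j0) i j.
Proof. by apply/matrixP => i j; rewrite !mxE /minf. Qed.

Lemma det2 (F : comPzRingType) (f : nat -> nat -> F) :
  \det (\matrix_(i < 2, j < 2) f i j) = f 0 0 * f 1 1 - f 0 1 * f 1 0.
Proof.
rewrite (expand_det_row _ ord0) !big_ord_recl big_ord0 /cofactor !det_mx11 !mxE /=.
ring.
Qed.

Lemma det3 (F : comPzRingType) (f : nat -> nat -> F) :
  \det (\matrix_(i < 3, j < 3) f i j) =
  f 0 0 * (f 1 1 * f 2 2 - f 1 2 * f 2 1)
  - f 0 1 * (f 1 0 * f 2 2 - f 1 2 * f 2 0)
  + f 0 2 * (f 1 0 * f 2 1 - f 1 1 * f 2 0).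
Proof.
rewrite (expand_det_row _ ord0) !big_ord_recl big_ord0 /cofactor !minor_mx !det2 /minf !mxE /=.
ring.
Qed.

Lemma det4 (F : comPzRingType) (f : nat -> nat -> F) :
  \det (\matrix_(i < 4, j < 4) f i j) =
  f 0 0 * (f 1 1 * (f 2 2 * f 3 3 - f 2 3 * f 3 2)
  - f 1 2 * (f 2 1 * f 3 3 - f 2 3 * f 3 1)
  + f 1 3 * (f 2 1 * f 3 2 - f 2 2 * f 3 1))
  - f 0 1 * (f 1 0 * (f 2 2 * f 3 3 - f 2 3 * f 3 2)
  - f 1 2 * (f 2 0 * f 3 3 - f 2 3 * f 3 0)
  + f 1 3 * (f 2 0 * f 3 2 - f 2 2 * f 3 0))
  + f 0 2 * (f 1 0 * (f 2 1 * f 3 3 - f 2 3 * f 3 1)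
  - f 1 1 * (f 2 0 * f 3 3 - f 2 3 * f 3 0)
  + f 1 3 * (f 2 0 * f 3 1 - f 2 1 * f 3 0))
  - f 0 3 * (f 1 0 * (f 2 1 * f 3 2 - f 2 2 * f 3 1)
  - f 1 1 * (f 2 0 * f 3 2 - f 2 2 * f 3 0)
  + f 1 2 * (f 2 0 * f 3 1 - f 2 1 * f 3 0)).
Proof.
rewrite (expand_det_row _ ord0) !big_ord_recl big_ord0 /cofactor !minor_mx !det3 /minf !mxE /=.
ring.
Qed.



Lemma coef3 (F : comNzRingType) (a1 b1 a2 b2 a3 b3 : F) i :
  ((a1%:P + b1%:P * 'X) * ((a2%:P + b2%:P * 'X) * ((a3%:P + b3%:P * 'X) * 1)))`_i =
  nth 0 [:: a1*a2*a3; b1*a2*a3 + a1*b2*a3 + a1*a2*b3; b1*b2*a3 + b1*a2*b3 + a1*b2*b3; b1*b2*b3] i.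
Proof.
have -> : (a1%:P + b1%:P * 'X) * ((a2%:P + b2%:P * 'X) * ((a3%:P + b3%:P * 'X) * 1)) =
  (a1*a2*a3)%:P + (b1*a2*a3 + a1*b2*a3 + a1*a2*b3)%:P * 'X
  + (b1*b2*a3 + b1*a2*b3 + a1*b2*b3)%:P * 'X^2 + (b1*b2*b3)%:P * 'X^3.
  rewrite !polyCD !polyCM.
  move: (a1%:P) (a2%:P) (a3%:P) (b1%:P) (b2%:P) (b3%:P) ('X : {poly F}) => A1 A2 A3 B1 B2 B3 x. ring.
rewrite !coefD !coefCM !coefC coefX !coefXn.
case: i => [|[|[|[|i]]]] /=; try ring. by rewrite nth_nil !mulr0 !addr0.
Qed.




Definition G0 (F : pzRingType) (ca cb cg : nat -> F) : F :=
  24 + 8 * (\sum_(j < 4) (ca j + cb j + cg j))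
  + 2 * (\sum_(j < 4) ((ca j + cb j + cg j)
     * (ca (j + 1)%N + cg (j + 2)%N + cb (j + 3)%N))).
Definition Ef (F : pzRingType) (sa sb sg : nat -> F) : F :=
  2 * (\sum_(j < 4)
        (sa j * sa (j + 1)%N
         + sb j * sb (j + 1)%N
         - sg j * sa (j + 1)%N
         - sg (j + 1)%N * sb j
         + sg j * sa (j + 2)%N
         + sg j * sb (j + 2)%N))
  - 4 * (\sum_(j < 4) sa (j + 1)%N * sb j)
  + 4 * sg 0 * sg 2
  + 4 * sg 1 * sg 3.

Section Core.
Variable F : fieldType.
Variable u q : nat -> nat -> F.
Definition ee (a b : nat) : F :=
  if (a %% 4 < b %% 4)%N then u (a %% 4) (b %% 4) else - u (b %% 4) (a %% 4).
Definition cs3 (j a b : nat) : F := ((ee j a)^-1 * ee j b + ee j a * (ee j b)^-1) / 2.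
Definition sn3 (j a b : nat) : F := ((ee j a)^-1 * ee j b - ee j a * (ee j b)^-1) / 2.
Definition CA j := cs3 j (j+1) (j+2).
Definition CB j := cs3 j (j+2) (j+3).
Definition CG j := cs3 j (j+3) (j+1).
Definition SA j := sn3 j (j+1) (j+2).
Definition SB j := sn3 j (j+2) (j+3).
Definition SG j := - sn3 j (j+3) (j+1).
Definition lift1 (k j : nat) : F * F :=
  if (k < j)%N then (q k j, q k j * (u k j)^-1) else (q j k * - u j k, q j k).
Definition col3 (l1 l2 l3 : F * F) : seq F :=
  let: (a1, b1) := l1 in let: (a2, b2) := l2 in let: (a3, b3) := l3 in
  [:: a1*a2*a3; b1*a2*a3 + a1*b2*a3 + a1*a2*b3; b1*b2*a3 + b1*a2*b3 + a1*b2*b3; b1*b2*b3].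
Definition colk (k : nat) : seq F :=
  match k with
  | 0 => col3 (lift1 0 1) (lift1 0 2) (lift1 0 3)
  | 1 => col3 (lift1 1 0) (lift1 1 2) (lift1 1 3)
  | 2 => col3 (lift1 2 0) (lift1 2 1) (lift1 2 3)
  | _ => col3 (lift1 3 0) (lift1 3 1) (lift1 3 2)
  end.

Lemma core :
  (2 : F) != 0 -> u 0 1 != 0 -> u 0 2 != 0 -> u 0 3 != 0 -> u 1 2 != 0 -> u 1 3 != 0 -> u 2 3 != 0 ->
  \det (\matrix_(i < 4, k < 4) nth 0 (colk k) i) =
  (q 0 1 * q 0 2 * q 0 3 * q 1 2 * q 1 3 * q 2 3) ^+ 2 *
   (G0 CA CB CG - Ef SA SB SG).
Proof.
move=> h2 h01 h02 h03 h12 h13 h23.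
rewrite (det4 (fun i k => nth 0 (colk k) i)) /= /G0 /Ef !big_ord_recl !big_ord0 /=.
rewrite /CA /CB /CG /SA /SB /SG /cs3 /sn3 /ee /=.
rewrite /lift1 /bump /addn /modn /=.
move: (u 0 1) (u 0 2) (u 0 3) (u 1 2) (u 1 3) (u 2 3) (q 0 1) (q 0 2) (q 0 3) (q 1 2) (q 1 3) (q 2 3) h01 h02 h03 h12 h13 h23 => a b c d e f qa qb qc qd qe qf ha hb hc hd he hf.
field.
by rewrite !oppr_eq0 h2 ha hb hc hd he hf.
Qed.
End Core.

Section Ang.
Variable R : realType.
Implicit Types a b : R[i].

Lemma cabsC a : (cabs a)%:C = `|a|.
Proof. by rewrite normc_def. Qed.

Lemma cabs_ge0 a : 0 <= cabs a.
Proof. exact: sqrtr_ge0. Qed.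

Lemma cabs_sqr a : cabs a ^+ 2 = Re a ^+ 2 + Im a ^+ 2.
Proof. by rewrite /cabs sqr_sqrtr // addr_ge0 // sqr_ge0. Qed.

Lemma cabs_eq0 a : (cabs a == 0) = (a == 0).
Proof. by rewrite -[a == 0]normr_eq0 -cabsC (inj_eq (@complexI _)). Qed.

Lemma ReJ a b : Re (conjc a * b) = Re a * Re b + Im a * Im b.
Proof. by case: a => a1 a2; case: b => b1 b2 /=; ring. Qed.

Lemma ImJ a b : Im (conjc a * b) = cross a b.
Proof. by case: a => a1 a2; case: b => b1 b2; rewrite /cross /=; ring. Qed.

Lemma cross_neq0 a b : cross a b != 0 -> a != 0 /\ b != 0.
Proof.
move=> h; split; apply/eqP => h0; move: h; rewrite h0 /cross /= ?mul0r ?mulr0 subrr eqxx //.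
Qed.

Lemma unit_inv a : a != 0 -> (a / (cabs a)%:C)^-1 = conjc (a / (cabs a)%:C).
Proof.
move=> a0.
have hA : (cabs a)%:C != 0 by rewrite cabsC normr_eq0.
rewrite invc_norm normf_div -cabsC.
rewrite (@ger0_norm _ (cabs a)%:C); last by rewrite ler0c cabs_ge0.
by rewrite divff // expr1n invr1 mul1r.
Qed.

Lemma conjE (x : R[i]) : x^* = conjc x.
Proof. by []. Qed.

Lemma conjM (x y : R[i]) : conjc (x * y) = conjc x * conjc y.
Proof. exact: rmorphM. Qed.
Lemma conjV (x : R[i]) : conjc (x^-1) = (conjc x)^-1.
Proof. exact: fmorphV. Qed.
Lemma conjK (x : R[i]) : conjc (conjc x) = x.
Proof. exact: conjcK. Qed.
Lemma realCM (x y : R) : (x * y)%:C = x%:C * y%:C :> R[i].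
Proof. exact: rmorphM. Qed.
Lemma realCV (x : R) : (x^-1)%:C = (x%:C)^-1 :> R[i].
Proof. exact: fmorphV. Qed.

Lemma conjC_real (x : R) : conjc (x%:C : R[i]) = x%:C.
Proof. by rewrite /real_complex_def /conjc /= oppr0. Qed.

Lemma conj_unit a : conjc (a / (cabs a)%:C) = conjc a / (cabs a)%:C.
Proof. by rewrite conjM conjV conjC_real. Qed.

Lemma lagrange a b : (Re a * Re b + Im a * Im b) ^+ 2 + cross a b ^+ 2
  = (cabs a * cabs b) ^+ 2.
Proof. by rewrite exprMn !cabs_sqr /cross; ring. Qed.

Lemma cos_ac a b : a != 0 -> b != 0 ->
  (cos (acos ((Re a * Re b + Im a * Im b) / (cabs a * cabs b))))%:C
  = ((a / (cabs a)%:C)^-1 * (b / (cabs b)%:C) + (a / (cabs a)%:C) * (b / (cabs b)%:C)^-1) / 2.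
Proof.
move=> a0 b0.
have hA : 0 < cabs a by rewrite lt_def cabs_eq0 a0 cabs_ge0.
have hB : 0 < cabs b by rewrite lt_def cabs_eq0 b0 cabs_ge0.
have hAB : 0 < cabs a * cabs b by apply: mulr_gt0.
set x := ((Re a * Re b + Im a * Im b) / (cabs a * cabs b)).
have hx : x ^+ 2 <= 1.
  rewrite /x expr_div_n ler_pdivrMr ?exprn_gt0 // mul1r -lagrange.
  by rewrite lerDl sqr_ge0.
rewrite acosK; last by rewrite in_itv /=; apply/andP; split; nra.
rewrite /x -ReJ realCM realCV ReJ_add !unit_inv // !conj_unit conjM conjK realCM.
have hA' : (cabs a)%:C != 0 by rewrite cabsC normr_eq0.
have hB' : (cabs b)%:C != 0 by rewrite cabsC normr_eq0.
field.
by apply/andP; split.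
Qed.

Lemma sin_ac a b (t : R) : (t = 1 \/ t = -1) -> 0 < t * cross a b ->
  (sin (acos ((Re a * Re b + Im a * Im b) / (cabs a * cabs b))))%:C
  = - (t%:C * 'i%C) * (((a / (cabs a)%:C)^-1 * (b / (cabs b)%:C) - (a / (cabs a)%:C) * (b / (cabs b)%:C)^-1) / 2).
Proof.
move=> ht hc.
have [a0 b0] : a != 0 /\ b != 0.
  by apply: cross_neq0; apply/eqP => h; move: hc; rewrite h mulr0 ltxx.
have hA : 0 < cabs a by rewrite lt_def cabs_eq0 a0 cabs_ge0.
have hB : 0 < cabs b by rewrite lt_def cabs_eq0 b0 cabs_ge0.
have hAB : 0 < cabs a * cabs b by apply: mulr_gt0.
set x := ((Re a * Re b + Im a * Im b) / (cabs a * cabs b)).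
have hx : x ^+ 2 <= 1.
  rewrite /x expr_div_n ler_pdivrMr ?exprn_gt0 // mul1r -lagrange.
  by rewrite lerDl sqr_ge0.
rewrite sin_acos; last by apply/andP; split; nra.
have -> : 1 - x ^+ 2 = (t * cross a b / (cabs a * cabs b)) ^+ 2.
  have ht2 : t ^+ 2 = 1 by case: ht => ->; rewrite ?expr1n ?sqrrN ?expr1n.
  rewrite /x !expr_div_n [(t * _) ^+ 2]exprMn ht2 mul1r.
  have hAB2 : (cabs a * cabs b) ^+ 2 != 0 by rewrite expf_neq0 // gt_eqF.
  rewrite -(lagrange a b).
  by field; rewrite lagrange.
rewrite sqrtr_sqr ger0_norm; last by rewrite divr_ge0 // ltW.
rewrite -ImJ !realCM realCV ImJ_sub !unit_inv // !conj_unit conjM conjK.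
have hA' : (cabs a)%:C != 0 by rewrite cabsC normr_eq0.
have hB' : (cabs b)%:C != 0 by rewrite cabsC normr_eq0.
rewrite realCM. field.
by apply/andP; split.
Qed.
End Ang.



Lemma G0_morph (F1 F2 : pzRingType) (f : {rmorphism F1 -> F2}) (ca cb cg : nat -> F1) :
  f (G0 ca cb cg) = G0 (fun j => f (ca j)) (fun j => f (cb j)) (fun j => f (cg j)).
Proof.
rewrite /G0 !big_ord_recl !big_ord0 /=.
by rewrite !(rmorphD, rmorphM, rmorph_nat, rmorph0).
Qed.

Lemma Ef_morph (F1 F2 : pzRingType) (f : {rmorphism F1 -> F2}) (sa sb sg : nat -> F1) :
  f (Ef sa sb sg) = Ef (fun j => f (sa j)) (fun j => f (sb j)) (fun j => f (sg j)).
Proof.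
rewrite /Ef !big_ord_recl !big_ord0 /=.
by rewrite !(rmorphD, rmorphB, rmorphN, rmorphM, rmorph_nat, rmorph0).
Qed.

Lemma G0_ext (F : pzRingType) (ca cb cg ca' cb' cg' : nat -> F) :
  (forall j, (j < 7)%N -> ca j = ca' j) ->
  (forall j, (j < 7)%N -> cb j = cb' j) ->
  (forall j, (j < 7)%N -> cg j = cg' j) ->
  G0 ca cb cg = G0 ca' cb' cg'.
Proof.
move=> ha hb hc.
rewrite /G0 !big_ord_recl !big_ord0 /bump /addn /=.
by rewrite !ha // !hb // !hc.
Qed.

Lemma Ef_ext (F : pzRingType) (ca cb cg ca' cb' cg' : nat -> F) :
  (forall j, (j < 7)%N -> ca j = ca' j) ->
  (forall j, (j < 7)%N -> cb j = cb' j) ->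
  (forall j, (j < 7)%N -> cg j = cg' j) ->
  Ef ca cb cg = Ef ca' cb' cg'.
Proof.
move=> ha hb hc.
rewrite /Ef !big_ord_recl !big_ord0 /bump /addn /=.
by rewrite !ha // !hb // !hc.
Qed.

Lemma Ef_scale (F : comPzRingType) (k : F) (sa sb sg : nat -> F) :
  Ef (fun j => k * sa j) (fun j => k * sb j) (fun j => k * sg j) = k ^+ 2 * Ef sa sb sg.
Proof.
rewrite /Ef !big_ord_recl !big_ord0 /=.
ring.
Qed.

Section Geo.
Variable R : realType.

Definition uu (z : nat -> R[i]) (a b : nat) : R[i] := (z b - z a) / (cabs (z b - z a))%:C.
Definition qq (z : nat -> R[i]) (a b : nat) : R[i] := (Num.sqrt (cabs (z b - z a)))%:C.

Lemma cabs_sym (x y : R[i]) : cabs (x - y) = cabs (y - x).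
Proof. by apply: (@complexI R); rewrite !cabsC distrC. Qed.

Lemma flipU (x y : R[i]) : (x - y) / (cabs (x - y))%:C = - ((y - x) / (cabs (y - x))%:C).
Proof. by rewrite cabs_sym -mulNr opprB. Qed.

Lemma cross_shift (a b c : R[i]) : cross (c - b) (a - b) = cross (b - a) (c - a).
Proof.
case: a => a1 a2; case: b => b1 b2; case: c => c1 c2; rewrite /cross /=; ring.
Qed.

Lemma cross_anti (a b : R[i]) : cross a b = - cross b a.
Proof. rewrite /cross; ring. Qed.

Lemma hopf_eq (z : nat -> R[i]) (k j : nat) : z k != z j ->
  hopf_lift k j (z k) (z j) = lift1 (uu z) (qq z) k j.
Proof.
move=> h; rewrite /hopf_lift /lift1 /uu /qq.
have hd : z j - z k != 0 by rewrite subr_eq0 eq_sym.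
case: ltnP => hkj /=.
  by rewrite unit_inv.
by rewrite cabs_sym -mulNr opprB.
Qed.

End Geo.



Ltac norm_all := rewrite /alpha /beta /gamma /angle /CA /CB /CG /SA /SB /SG /cs3 /sn3 /ee /uu /cyc /addn /modn /=.
Ltac flips z1 z2 z3 z4 := rewrite ?(flipU z1 z2) ?(flipU z1 z3) ?(flipU z1 z4) ?(flipU z2 z3) ?(flipU z2 z4) ?(flipU z3 z4).
Ltac sinrw := match goal with
 | H : 0 < ?t * cross ?a ?b |- context [sin (acos ((Re ?a * Re ?b + Im ?a * Im ?b) / (cabs ?a * cabs ?b)))] =>
   rewrite (sin_ac (t:=t) ltac:(assumption) H)
 end.

Lemma qsq (R : realType) (r : R) : 0 <= r -> ((Num.sqrt r)%:C : R[i]) ^+ 2 = r%:C.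
Proof. by move=> h; rewrite -rmorphXn sqr_sqrtr. Qed.
Lemma realCN (R : realType) (x : R) : ((- x)%:C : R[i]) = - (x%:C).
Proof. exact: rmorphN. Qed.
Lemma realCD (R : realType) (x y : R) : ((x + y)%:C : R[i]) = x%:C + y%:C.
Proof. exact: rmorphD. Qed.
Lemma realCX (R : realType) (x : R) n : ((x ^+ n)%:C : R[i]) = x%:C ^+ n.
Proof. exact: rmorphXn. Qed.

Unset Implicit Arguments.

Theorem theorem1 (R : realType) (z1 z2 z3 z4 : R[i]) :
  convex_quad (cyc z1 z2 z3 z4) ->
  atiyah_det (cyc z1 z2 z3 z4) =
    (cabs (z2 - z1) * cabs (z3 - z1) * cabs (z4 - z1)
     * cabs (z3 - z2) * cabs (z4 - z2) * cabs (z4 - z3)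
     * (24 + 8 * S1 (cyc z1 z2 z3 z4) + 2 * S2 (cyc z1 z2 z3 z4)
        + Eterm (cyc z1 z2 z3 z4)))%:C.
Proof.
move=> [s [hs H]].
set z := cyc z1 z2 z3 z4.
have hs' : -s = 1 \/ -s = -1 by case: hs => ->; [right|left]; rewrite ?opprK.
have hA0 : 0 < s * cross (z2 - z1) (z3 - z1) := H 0%N 2%N (or_introl erefl).
have hA1 : 0 < s * cross (z3 - z2) (z4 - z2) := H 1%N 2%N (or_introl erefl).
have hA2 : 0 < s * cross (z4 - z3) (z1 - z3) := H 2%N 2%N (or_introl erefl).
have hA3 : 0 < s * cross (z1 - z4) (z2 - z4) := H 3%N 2%N (or_introl erefl).
have hC0 : 0 < s * cross (z2 - z1) (z4 - z1) := H 0%N 3%N (or_intror erefl).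
have hC1 : 0 < s * cross (z3 - z2) (z1 - z2) := H 1%N 3%N (or_intror erefl).
have hC2 : 0 < s * cross (z4 - z3) (z2 - z3) := H 2%N 3%N (or_intror erefl).
have hC3 : 0 < s * cross (z1 - z4) (z3 - z4) := H 3%N 3%N (or_intror erefl).
have hB0 : 0 < s * cross (z3 - z1) (z4 - z1) by rewrite -cross_shift.
have hB1 : 0 < s * cross (z4 - z2) (z1 - z2) by rewrite -cross_shift.
have hB2 : 0 < s * cross (z1 - z3) (z2 - z3) by rewrite -cross_shift.
have hB3 : 0 < s * cross (z2 - z4) (z3 - z4) by rewrite -cross_shift.
have hG0 : 0 < - s * cross (z4 - z1) (z2 - z1) by rewrite cross_anti mulrNN.
have hG1 : 0 < - s * cross (z1 - z2) (z3 - z2) by rewrite cross_anti mulrNN.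
have hG2 : 0 < - s * cross (z2 - z3) (z4 - z3) by rewrite cross_anti mulrNN.
have hG3 : 0 < - s * cross (z3 - z4) (z1 - z4) by rewrite cross_anti mulrNN.
have nz : forall a b : R[i], 0 < s * cross a b -> a != 0 /\ b != 0.
  move=> a b h; apply: cross_neq0; apply/eqP => h0; move: h; rewrite h0 mulr0 ltxx.
  done.
have [n21 n31] := nz _ _ hA0.
have [n32 n42] := nz _ _ hA1.
have [n43 n13] := nz _ _ hA2.
have [n14 n24] := nz _ _ hA3.
have n12 : z1 - z2 != 0 by rewrite -opprB oppr_eq0.
have n41 : z4 - z1 != 0 by rewrite -opprB oppr_eq0.
have n23 : z2 - z3 != 0 by rewrite -opprB oppr_eq0.
have n34 : z3 - z4 != 0 by rewrite -opprB oppr_eq0.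
have dist : forall a b : 'I_4, a != b -> z a != z b.
  move=> [[|[|[|[|a]]]] Ha] // [[|[|[|[|b]]]] Hb] //= _; rewrite /z /cyc /=;
  by rewrite -subr_eq0 // ?(eq_sym (z1 - _)).
have hdet : atiyah_det z = \det (\matrix_(i < 4, k < 4) nth 0 (colk (uu z) (qq z) k) i).
  rewrite /atiyah_det; congr (\det _); apply/matrixP => i k; rewrite !mxE.
  have -> : atiyah_poly z k = \prod_(j < 4 | j != k)
      ((lift1 (uu z) (qq z) k j).1%:P + (lift1 (uu z) (qq z) k j).2%:P * 'X).
    rewrite /atiyah_poly; apply: eq_bigr => j hj; rewrite hopf_eq //.
    by apply: dist; rewrite eq_sym.
  rewrite big_mkcond !big_ord_recl big_ord0.
  by case: k => [[|[|[|[|k]]]] Hk] //=; rewrite !mul1r coef3.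
have unz : forall a : R[i], a != 0 -> a / (cabs a)%:C != 0.
  move=> a ha.
  have hc : (cabs a)%:C != 0 :> R[i] by rewrite cabsC normr_eq0.
  by rewrite mulf_eq0 negb_or ha invr_eq0 hc.
rewrite hdet core; first last.
- by rewrite /uu /z /cyc /= unz.
- by rewrite /uu /z /cyc /= unz.
- by rewrite /uu /z /cyc /= unz.
- by rewrite /uu /z /cyc /= unz.
- by rewrite /uu /z /cyc /= unz.
- by rewrite /uu /z /cyc /= unz.
- by rewrite pnatr_eq0.
pose K : R[i] := - (s%:C * 'i%C).
have pA : forall j, (j < 7)%N -> (cos (alpha z j))%:C = CA (uu z) j.
  move=> j hj; do 7 (case: j hj => [|j] hj; [rewrite /z; norm_all; rewrite cos_ac //; flips z1 z2 z3 z4; done|]).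
  by [].
have pB : forall j, (j < 7)%N -> (cos (beta z j))%:C = CB (uu z) j.
  move=> j hj; do 7 (case: j hj => [|j] hj; [rewrite /z; norm_all; rewrite cos_ac //; flips z1 z2 z3 z4; done|]).
  by [].
have pG : forall j, (j < 7)%N -> (cos (gamma z j))%:C = CG (uu z) j.
  move=> j hj; do 7 (case: j hj => [|j] hj; [rewrite /z; norm_all; rewrite cos_ac //; flips z1 z2 z3 z4; done|]).
  by [].
have qA : forall j, (j < 7)%N -> (sin (alpha z j))%:C = K * SA (uu z) j.
  move=> j hj; do 7 (case: j hj => [|j] hj; [rewrite /z /K; norm_all; first [rewrite (sin_ac hs hA0) | rewrite (sin_ac hs hA1) | rewrite (sin_ac hs hA2) | rewrite (sin_ac hs hA3) | rewrite (sin_ac hs hB0) | rewrite (sin_ac hs hB1) | rewrite (sin_ac hs hB2) | rewrite (sin_ac hs hB3) | rewrite (sin_ac hs' hG0) | rewrite (sin_ac hs' hG1) | rewrite (sin_ac hs' hG2) | rewrite (sin_ac hs' hG3)]; flips z1 z2 z3 z4; rewrite ?realCN; ring|]).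
  by [].
have qB : forall j, (j < 7)%N -> (sin (beta z j))%:C = K * SB (uu z) j.
  move=> j hj; do 7 (case: j hj => [|j] hj; [rewrite /z /K; norm_all; first [rewrite (sin_ac hs hA0) | rewrite (sin_ac hs hA1) | rewrite (sin_ac hs hA2) | rewrite (sin_ac hs hA3) | rewrite (sin_ac hs hB0) | rewrite (sin_ac hs hB1) | rewrite (sin_ac hs hB2) | rewrite (sin_ac hs hB3) | rewrite (sin_ac hs' hG0) | rewrite (sin_ac hs' hG1) | rewrite (sin_ac hs' hG2) | rewrite (sin_ac hs' hG3)]; flips z1 z2 z3 z4; rewrite ?realCN; ring|]).
  by [].
have qG : forall j, (j < 7)%N -> (sin (gamma z j))%:C = K * SG (uu z) j.
  move=> j hj; do 7 (case: j hj => [|j] hj; [rewrite /z /K; norm_all; first [rewrite (sin_ac hs hA0) | rewrite (sin_ac hs hA1) | rewrite (sin_ac hs hA2) | rewrite (sin_ac hs hA3) | rewrite (sin_ac hs hB0) | rewrite (sin_ac hs hB1) | rewrite (sin_ac hs hB2) | rewrite (sin_ac hs hB3) | rewrite (sin_ac hs' hG0) | rewrite (sin_ac hs' hG1) | rewrite (sin_ac hs' hG2) | rewrite (sin_ac hs' hG3)]; flips z1 z2 z3 z4; rewrite ?realCN; ring|]).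
  by [].
have hK : K ^+ 2 = -1.
  rewrite /K sqrrN exprMn sqr_i -realCX.
  by case: hs => ->; rewrite ?sqrrN expr1n rmorph1 mul1r.
rewrite realCM.
have hq : (qq z 0 1 * qq z 0 2 * qq z 0 3 * qq z 1 2 * qq z 1 3 * qq z 2 3) ^+ 2 =
  (cabs (z2 - z1) * cabs (z3 - z1) * cabs (z4 - z1)
     * cabs (z3 - z2) * cabs (z4 - z2) * cabs (z4 - z3))%:C.
  by rewrite /qq /z /cyc /= !exprMn !qsq ?cabs_ge0 // !realCM.
rewrite hq; congr (_ * _).
rewrite (_ : 24 + 8 * S1 z + 2 * S2 z + Eterm z =
   G0 (fun j => cos (alpha z j)) (fun j => cos (beta z j)) (fun j => cos (gamma z j))
   + Ef (fun j => sin (alpha z j)) (fun j => sin (beta z j)) (fun j => sin (gamma z j))) //.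
rewrite realCD (G0_morph (real_complex R : {rmorphism R -> R[i]})).
rewrite (Ef_morph (real_complex R : {rmorphism R -> R[i]})).
rewrite (@G0_ext _ _ _ _ (CA (uu z)) (CB (uu z)) (CG (uu z))); first last.
- by move=> j hj; exact: pG.
- by move=> j hj; exact: pB.
- by move=> j hj; exact: pA.
rewrite (@Ef_ext _ _ _ _ (fun j => K * SA (uu z) j) (fun j => K * SB (uu z) j) (fun j => K * SG (uu z) j)); first last.
- by move=> j hj; exact: qG.
- by move=> j hj; exact: qB.
- by move=> j hj; exact: qA.
by rewrite Ef_scale hK mulN1r.
Qed.
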